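(* Let $H$ be a (complex) Hilbert space, $D\subset H$ a dense subspace, and $\mathcal{A},\mathcal{B}$ linear self-adjoint operators with domain $D$ (i.e. $\mathcal{A},\mathcal{B}:D\subset H\to H$). For $\alpha\in\mathbb{R}$ define $$\mathcal{T}=\begin{pmatrix}\mathcal{A}&\alpha\mathcal{B}\\-\alpha\mathcal{A}&\mathcal{B}\end{pmatrix}:D\times D\subset H\times H\to H\times H.$$ Then $\sigma(\mathcal{T})\cap i\mathbb{R}\subset\{0\}$. *)

(* Defs.v *)
From HB Require Import structures.
From mathcomp Require Import all_boot all_order all_algebra.
From mathcomp Require Import complex.
From mathcomp Require Import reals.
Set Implicit Arguments. Unset Strict Implicit. Unset Printing Implicit Defensive.
Import Order.TTheory GRing.Theory Num.Theory.
Local Open Scope ring_scope.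

Section Hilbert.
Variable R : realType.
Local Notation C := (R[i]).

Definition ipnorm (W : lmodType C) (ip : W -> W -> C) (x : W) : R :=
  Num.sqrt (complex.Re (ip x x)).

Definition inner_product (W : lmodType C) (ip : W -> W -> C) : Prop :=
  [/\ forall (a : C) (x y z : W), ip (a *: x + y) z = a * ip x z + ip y z,
      forall x y : W, ip y x = conjc (ip x y),
      forall x : W, 0 <= ip x x
    & forall x : W, ip x x = 0 -> x = 0].

Definition hilbert_space (W : lmodType C) (ip : W -> W -> C) : Prop :=
  inner_product ip /\
  forall u : nat -> W,
    (forall e : R, 0 < e -> exists N, forall m n, (N <= m)%N -> (N <= n)%N ->
        ipnorm ip (u m - u n) < e) ->
    exists l : W, forall e : R, 0 < e -> exists N, forall n, (N <= n)%N ->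
        ipnorm ip (u n - l) < e.

Definition subspace (W : lmodType C) (D : W -> Prop) : Prop :=
  D 0 /\ forall (a : C) (x y : W), D x -> D y -> D (a *: x + y).

Definition dense (W : lmodType C) (ip : W -> W -> C) (D : W -> Prop) : Prop :=
  forall (x : W) (e : R), 0 < e -> exists2 d, D d & ipnorm ip (x - d) < e.

Definition linear_on (W : lmodType C) (D : W -> Prop) (A : W -> W) : Prop :=
  forall (a : C) (x y : W), D x -> D y -> A (a *: x + y) = a *: A x + A y.

Definition adj_dom (W : lmodType C) (ip : W -> W -> C) (D : W -> Prop)
  (A : W -> W) (y : W) : Prop :=
  exists z : W, forall x, D x -> ip (A x) y = ip x z.

(* A : D subset W -> W is linear and self-adjoint: A = A^*, i.e.
   dom A^* = D and A^* y = A y on D. *)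
Definition self_adjoint (W : lmodType C) (ip : W -> W -> C) (D : W -> Prop)
  (A : W -> W) : Prop :=
  [/\ linear_on D A,
      forall y, D y <-> adj_dom ip D A y
    & forall y z, D y -> (forall x, D x -> ip (A x) y = ip x z) -> A y = z].

Definition resolvent (W : lmodType C) (ip : W -> W -> C) (D : W -> Prop)
  (S : W -> W) (lam : C) : Prop :=
  exists Rs : W -> W,
    [/\ forall f, D (Rs f) /\ S (Rs f) - lam *: Rs f = f,
        forall u, D u -> Rs (S u - lam *: u) = u
      & exists c : R, forall f, ipnorm ip (Rs f) <= c * ipnorm ip f].

Definition spectrum (W : lmodType C) (ip : W -> W -> C) (D : W -> Prop)
  (S : W -> W) (lam : C) : Prop := ~ resolvent ip D S lam.

Definition ip_prod (V : lmodType C) (ip : V -> V -> C) (u v : V * V) : C :=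
  ip u.1 v.1 + ip u.2 v.2.

Definition dom_prod (V : lmodType C) (D : V -> Prop) (u : V * V) : Prop :=
  D u.1 /\ D u.2.

Definition Tblock (V : lmodType C) (A B : V -> V) (alpha : R) (u : V * V)
  : V * V :=
  (A u.1 + (alpha%:C)%C *: B u.2, - ((alpha%:C)%C *: A u.1) + B u.2).

End Hilbert.

(* Main.v *)
Require Import Defs.
From HB Require Import structures.
From mathcomp Require Import all_boot all_order all_algebra.
From mathcomp Require Import complex.
From mathcomp Require Import reals boolp classical_sets.
From mathcomp Require Import ring lra.
Import Order.TTheory GRing.Theory Num.Theory.
Local Open Scope ring_scope.
Set Implicit Arguments. Unset Strict Implicit. Unset Printing Implicit Defensive.
Local Open Scope complex_scope.
Local Notation Re := complex.Re.
Local Notation Im := complex.Im.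

Section Cx.
Variable R : realType.
Definition Nc (z : R[i]) : R := Re z ^+ 2 + Im z ^+ 2.
Lemma Nc_ge0 z : 0 <= Nc z.
Proof. rewrite /Nc; case: z => a b /=; nra. Qed.
Lemma NcM (x y : R[i]) : Nc (x * y) = Nc x * Nc y.
Proof. by case: x => a b; case: y => c d; rewrite /Nc /=; ring. Qed.
Lemma NcD (x y : R[i]) : Nc (x + y) <= 2 * Nc x + 2 * Nc y.
Proof. case: x => a b; case: y => c d; rewrite /Nc /=.
have := sqr_ge0 (a - c); have := sqr_ge0 (b - d); nra. Qed.
Lemma NcN (x : R[i]) : Nc (- x) = Nc x.
Proof. by case: x => a b; rewrite /Nc /=; ring. Qed.
Lemma NcJ (x : R[i]) : Nc (conjc x) = Nc x.
Proof. by case: x => a b; rewrite /Nc /=; ring. Qed.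
Lemma Nc_eq0 (x : R[i]) : Nc x = 0 -> x = 0.
Proof.
case: x => a b; rewrite /Nc /= => h.
have ha : a = 0 by nra. have hb : b = 0 by nra.
by rewrite ha hb.
Qed.
Lemma NcRc (a : R) : Nc (a%:C) = a ^+ 2.
Proof. by rewrite /Nc /=; ring. Qed.
Lemma cjD (x y : R[i]) : conjc (x + y) = conjc x + conjc y.
Proof. by case: x => a b; case: y => c d; rewrite /= opprD. Qed.
Lemma cjM (x y : R[i]) : conjc (x * y) = conjc x * conjc y.
Proof. case: x => a b; case: y => c d; apply/eqP; rewrite eq_complex /=; apply/andP; split; apply/eqP; ring. Qed.
Lemma cjN (x : R[i]) : conjc (- x) = - conjc x.
Proof. by case: x. Qed.
Lemma cjK (x : R[i]) : conjc (conjc x) = x.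
Proof. by case: x => a b /=; rewrite opprK. Qed.
End Cx.

Section IP.
Variable R : realType.
Variable W : lmodType R[i].
Variable p : W -> W -> R[i].
Hypothesis hp : inner_product p.

Definition N (x : W) : R := Re (p x x).

Lemma pDl x y z : p (x + y) z = p x z + p y z.
Proof. by case: hp => h _ _ _; rewrite -{1}[x]scale1r h mul1r. Qed.
Lemma p0l z : p 0 z = 0.
Proof.
have h := pDl 0 0 z; rewrite addr0 in h.
have : p 0 z + p 0 z = p 0 z + 0 by rewrite addr0 -h.
by move/addrI.
Qed.
Lemma pZl a x z : p (a *: x) z = a * p x z.
Proof. by case: hp => h _ _ _; rewrite -[a *: x]addr0 h p0l addr0. Qed.
Lemma pNl x z : p (- x) z = - p x z.
Proof. by rewrite -scaleN1r pZl mulN1r. Qed.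
Lemma pBl x y z : p (x - y) z = p x z - p y z.
Proof. by rewrite pDl pNl. Qed.
Lemma pC x y : p y x = conjc (p x y).
Proof. by case: hp => _ h _ _; apply: h. Qed.
Lemma pDr x y z : p z (x + y) = p z x + p z y.
Proof. by rewrite pC pDl cjD -!pC. Qed.
Lemma pZr a x z : p z (a *: x) = conjc a * p z x.
Proof. by rewrite pC pZl cjM -!pC. Qed.
Lemma pNr x z : p z (- x) = - p z x.
Proof. by rewrite pC pNl cjN -!pC. Qed.
Lemma pBr x y z : p z (x - y) = p z x - p z y.
Proof. by rewrite pDr pNr. Qed.
Lemma p0r z : p z 0 = 0.
Proof. by rewrite pC p0l conjc0. Qed.
Lemma pxx x : p x x = (N x)%:C.
Proof.
case: hp => _ _ h _; have := h x; rewrite /N.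
case: (p x x) => a b; rewrite lecE /= => /andP[/eqP hb _].
by rewrite hb.
Qed.
Lemma N_ge0 x : 0 <= N x.
Proof.
case: hp => _ _ h _; have := h x; rewrite /N.
by case: (p x x) => a b; rewrite lecE /= => /andP[_ ->].
Qed.
Lemma N_eq0 x : N x = 0 -> x = 0.
Proof. by case: hp => _ _ _ h hN; apply: h; rewrite pxx hN. Qed.
Lemma N0 : N 0 = 0.
Proof. by rewrite /N p0l. Qed.
Lemma NexpD x y (t : R[i]) :
  N (x + t *: y) = N x + 2 * Re (conjc t * p x y) + Nc t * N y.
Proof.
rewrite /N pDl !pDr pZl !pZr pZl (pC x y).
rewrite -/(N x) -/(N y) pxx (pxx y).
case: t => a b; case: (p x y) => c d; rewrite /Nc /=; ring.
Qed.
Lemma NZ (t : R[i]) x : N (t *: x) = Nc t * N x.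
Proof.
rewrite /N pZl pZr -/(N x) pxx.
case: t => a b; rewrite /Nc /=; ring.
Qed.
Lemma NN x : N (- x) = N x.
Proof. by rewrite /N pNl pNr opprK. Qed.
Lemma NB x y : N (x - y) = N (y - x).
Proof. by rewrite -NN opprB. Qed.
Lemma ND x y : N (x + y) <= 2 * N x + 2 * N y.
Proof.
have h1 := NexpD x y 1; have h2 := NexpD x y (-1).
rewrite scale1r in h1; rewrite scaleN1r in h2.
have := N_ge0 (x - y).
rewrite h1 /Nc /= in h2 *.
move: h2; rewrite /Nc /= => ->.
case: (p x y) => c d /=.
have := N_ge0 x; have := N_ge0 y.

set q := N x; set r := N y.
rewrite /= !expr2; lra.
Qed.

End IP.

Section CSsec.
Variable R : realType.
Lemma quad_lem (a q c : R) : 0 <= q -> 0 <= c ->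
  (forall s, 0 <= a - 2 * s * q + s ^+ 2 * q * c) -> q <= a * c.
Proof.
move=> q0 c0 H.
have [ce|cpos] := eqVneq c 0.
  rewrite ce in H *.
  have [->|qpos] := eqVneq q 0; first by rewrite mulr0.
  have h := H ((a + 1) / (2 * q)).
  rewrite mulr0 addr0 in h.
  have e : 2 * ((a + 1) / (2 * q)) * q = a + 1.
    by field.
  rewrite e in h; lra.
have h := H c^-1.
have e : a - 2 * c^-1 * q + c^-1 ^+ 2 * q * c = (a * c - q) / c by field.
rewrite e pmulr_lge0 ?invr_gt0 ?lt0r ?cpos // in h.
by rewrite -subr_ge0.
Qed.
End CSsec.

Section IP2.
Variable R : realType.
Variable W : lmodType R[i].
Variable p : W -> W -> R[i].
Hypothesis hp : inner_product p.
Local Notation N := (N p).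

Lemma CS x y : Nc (p x y) <= N x * N y.
Proof.
apply: (quad_lem (Nc_ge0 _) (N_ge0 hp y)) => s.
have := N_ge0 hp (x + (-(s%:C * p x y)) *: y); rewrite NexpD //.
have e1 : forall z, Re (conjc (-(s%:C * z)) * z) = - s * Nc z.
  by case=> c d; rewrite /Nc /=; ring.
have e2 : forall z, Nc (-(s%:C * z)) = s^+2 * Nc z.
  by case=> c d; rewrite /Nc /=; ring.
rewrite e1 e2; nra.
Qed.
End IP2.

Section RealAux.
Variable R : realType.
Definition invn (n : nat) : R := (n.+1%:R)^-1.
Lemma invn_gt0 n : 0 < invn n.
Proof. by rewrite /invn invr_gt0 ltr0Sn. Qed.
Lemma invn_small (e : R) : 0 < e -> exists M, invn M < e.
Proof. by move=> /ltr_add_invr [k hk]; exists k; rewrite add0r in hk. Qed.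
Lemma invn_mono M n : (M <= n)%N -> invn n <= invn M.
Proof.
move=> h; rewrite /invn lef_pV2 ?posrE ?ltr0Sn // ler_nat ltnS //.
Qed.
Lemma le_eps0 (x : R) : 0 <= x -> (forall e, 0 < e -> x <= e) -> x = 0.
Proof.
move=> x0 h; apply/eqP; rewrite eq_le x0 andbT leNgt; apply/negP => hx.
have := h (x / 2) (divr_gt0 hx (ltr0Sn _ 1)); lra.
Qed.
End RealAux.

Definition cvgN (R : realType) (W : lmodType R[i]) (p : W -> W -> R[i])
  (u : nat -> W) (l : W) :=
  forall e : R, 0 < e -> exists M, forall n, (M <= n)%N -> N p (u n - l) <= e.
Definition cauchyN (R : realType) (W : lmodType R[i]) (p : W -> W -> R[i])
  (u : nat -> W) :=
  forall e : R, 0 < e -> exists M, forall m n, (M <= m)%N -> (M <= n)%N ->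
    N p (u m - u n) <= e.
Definition completeN (R : realType) (W : lmodType R[i]) (p : W -> W -> R[i]) :=
  forall u, cauchyN p u -> exists l, cvgN p u l.

Section Gen.
Variable R : realType.
Variable W : lmodType R[i].
Variable p : W -> W -> R[i].
Hypothesis hp : inner_product p.
Local Notation N := (N p).

Lemma para x y : N (x + y) + N (x - y) = 2 * N x + 2 * N y.
Proof.
have h1 := NexpD hp x y 1; have h2 := NexpD hp x y (-1).
rewrite scale1r in h1; rewrite scaleN1r in h2.
rewrite h1 h2 /Nc /=; case: (p x y) => a b /=; ring.
Qed.

Lemma cauchy_bound (v : nat -> W) (C : R) : 0 <= C ->
  (forall m n, N (v m - v n) <= C * (invn R m + invn R n)) -> cauchyN p v.
Proof.
move=> C0 h e e0.
have e1 : 0 < e / (2 * (C + 1)) by apply: divr_gt0 => //; lra.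
have [M hM] := @invn_small R _ e1.
exists M => m n hm hn.
apply: (le_trans (h m n)).
have := @invn_mono R _ _ hm; have := @invn_mono R _ _ hn.
have := invn_gt0 R m; have := invn_gt0 R n.
move: hM; set a := invn R M; set b := invn R m; set c := invn R n => hM.
move=> ha hb hc hd.
have : a * (2 * (C + 1)) < e.
  by rewrite -ltr_pdivlMr //; lra.
nra.
Qed.
End Gen.

Section Gen2.
Variable R : realType.
Variable W : lmodType R[i].
Variable p : W -> W -> R[i].
Hypothesis hp : inner_product p.
Local Notation N := (N p).

Lemma ReJsm (s : R) (z : R[i]) : Re (conjc (-(s%:C * z)) * z) = - s * Nc z.
Proof. by case: z => c d; rewrite /Nc /=; ring. Qed.
Lemma Ncsm (s : R) (z : R[i]) : Nc (-(s%:C * z)) = s^+2 * Nc z.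
Proof. by case: z => c d; rewrite /Nc /=; ring. Qed.

Lemma vec1 (f a b : W) : (f - a) - (f - b) = b - a.
Proof. by rewrite opprB addrC addrA subrK. Qed.
Lemma vec2 (f a b : W) : (2%:R : R[i]) *: (f - (2%:R : R[i])^-1 *: (a + b)) = (f - a) + (f - b).
Proof.
rewrite scalerBr scalerA mulrV ?unitfE ?pnatr_eq0 // scale1r scaler_nat mulr2n.
by rewrite opprD addrACA.
Qed.
Lemma vec3 (f a b : W) : f - (- a + b) = (f - b) + a.
Proof. by rewrite opprD opprK addrA addrAC. Qed.
Lemma Nc2 : Nc (2%:R : R[i]) = 4%:R.
Proof. by rewrite /Nc /=; ring. Qed.
End Gen2.

Section Gen3.
Variable R : realType.
Variable W : lmodType R[i].
Variable p : W -> W -> R[i].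
Hypothesis hp : inner_product p.
Local Notation N := (N p).

Lemma surj_gen (E : W -> Prop) (K : W -> W) (c : R) :
  completeN p -> E 0 -> (forall a x y, E x -> E y -> E (a *: x + y)) ->
  linear_on E K -> 0 <= c ->
  (forall u, E u -> N u <= c * N (K u)) ->
  (forall (u : nat -> W) l g, (forall n, E (u n)) -> cvgN p u l ->
      cvgN p (fun n => K (u n)) g -> E l /\ K l = g) ->
  (forall g, (forall v, E v -> p (K v) g = 0) -> g = 0) ->
  forall f, exists u, E u /\ K u = f.
Proof.
move=> hcomp E0 EL KL c0 hc hcl horth f.
have K0 : K 0 = 0.
  have h := KL 1 0 0 E0 E0; rewrite scale1r addr0 scale1r in h.
  have : K 0 + K 0 = K 0 + 0 by rewrite addr0 -h.
  by move/addrI.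
have EB x y : E x -> E y -> E (x - y).
  by move=> Ex Ey; have := EL (-1) y x Ey Ex; rewrite scaleN1r addrC.
have KB x y : E x -> E y -> K (x - y) = K x - K y.
  by move=> Ex Ey; have := KL (-1) y x Ey Ex; rewrite !scaleN1r addrC (addrC (- K y)).
set S : set R := (fun r : R => exists u, E u /\ r = N (f - K u)).
have hS : has_inf S.
  split; first by exists (N (f - K 0)); exists 0.
  by exists 0 => r [u [_ ->]]; exact: N_ge0.
set d := inf S.
have dle w : E w -> d <= N (f - K w).
  by move=> Ew; apply: (ge_inf hS.2); exists w.
have approx n : exists u, E u /\ N (f - K u) < d + invn R n.
  have [r [w [Ew ->]] hr] := inf_adherent (invn_gt0 R n) hS.
  by exists w.
have [u hu] := choice approx.
have hKc m n : N (K (u m) - K (u n)) <= 2 * (invn R m + invn R n).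
  set x := f - K (u n); set y := f - K (u m).
  have hxy : x - y = K (u m) - K (u n) by rewrite /x /y vec1.
  set w := (2%:R : R[i])^-1 *: (u n + u m).
  have Enm : E (u n + u m).
    by rewrite -[u n]scale1r; apply: EL; [case: (hu n)|case: (hu m)].
  have Ew : E w by rewrite /w -[_ *: _]addr0; apply: EL.
  have Kw : K w = (2%:R : R[i])^-1 *: (K (u n) + K (u m)).
    rewrite /w -[_ *: (u n + u m)]addr0 KL // K0 addr0 -{1}[u n]scale1r KL ?scale1r //.
      by case: (hu n).
    by case: (hu m).
  have hxpy : x + y = (2%:R : R[i]) *: (f - K w) by rewrite Kw vec2.
  have := para hp x y; rewrite hxy hxpy NZ // Nc2.
  have := dle w Ew; have := (hu n).2; have := (hu m).2.
  rewrite -/x -/y. move=> h1 h2 h3 h4. lra.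
have hKcauchy : cauchyN p (fun n => K (u n)).
  by apply: (@cauchy_bound _ _ _ _ 2) => //; lra.
have huc : cauchyN p u.
  apply: (@cauchy_bound _ _ _ _ (c * 2)); first by nra.
  move=> m n; apply: (le_trans (hc _ _)); first by apply: EB; [case: (hu m)|case: (hu n)].
  rewrite KB; [|case: (hu m)|case: (hu n)] => //.
  by rewrite -mulrA; apply: ler_wpM2l.
have [l hl] := hcomp _ huc.
have [g hg] := hcomp _ hKcauchy.
have [El Klg] := hcl u l g (fun n => (hu n).1) hl hg.
exists l; split => //; rewrite Klg.
apply/eqP; rewrite eq_sym -subr_eq0; apply/eqP; apply: horth => v Ev.
rewrite (pC hp).
suff -> : p (f - g) (K v) = 0 by rewrite conjc0.
set Q := N (K v).
have Q0 : 0 <= Q by apply: N_ge0.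
have hbn n : Nc (p (f - K (u n)) (K v)) <= (Q + 1)^+2 * invn R n.
  set bb := p (f - K (u n)) (K v).
  set s := (Q + 1)^-1.
  set t := -(s%:C * bb).
  have Ew' : E ((-t) *: v + u n) by apply: EL => //; case: (hu n).
  have := dle _ Ew'.
  rewrite KL //; last by case: (hu n).
  rewrite scaleNr vec3 NexpD // ReJsm Ncsm -/Q.
  have := (hu n).2; have := Nc_ge0 bb; have := invn_gt0 R n.
  set X := N (f - K (u n)); set nb := Nc bb; set iv := invn R n.
  move=> hiv hnb hX hd.
  have hs : s * (Q + 1) = 1 by rewrite /s mulVf // lt0r_neq0 //; lra.
  have hs0 : 0 < s by rewrite /s invr_gt0; lra.
  have h1 : nb * (2 * s - s ^+ 2 * Q) < iv by lra.
  have h2 : nb * (2 * s - s ^+ 2 * Q) * (Q + 1) ^+ 2 = nb * (Q + 2).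
    have -> : nb * (2 * s - s ^+ 2 * Q) * (Q + 1) ^+ 2 =
      nb * (2 * (s * (Q + 1)) * (Q + 1) - (s * (Q + 1)) ^+ 2 * Q) by ring.
    by rewrite hs; ring.
  have h3 : nb * (Q + 2) <= iv * (Q + 1) ^+ 2.
    rewrite -h2; apply: ler_wpM2r; [exact: sqr_ge0 | lra].
  nra.
apply: Nc_eq0; apply: le_eps0; first exact: Nc_ge0.
move=> e e0.
have e1 : 0 < e / (4%:R * (Q + 1)) by apply: divr_gt0 => //; lra.
have e2 : 0 < e / (4%:R * (Q + 1) ^+ 2).
  apply: divr_gt0 => //; apply: mulr_gt0; first lra.
  by apply: exprn_gt0; lra.
have [M1 hM1] := hg _ e1.
have [M2 hM2] := @invn_small R _ e2.
set n := maxn M1 M2.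
have hn1 := hM1 n (leq_maxl _ _).
have hn2 := @invn_mono R _ _ (leq_maxr M1 M2).
have eqb : p (f - g) (K v) = p (f - K (u n)) (K v) + p (K (u n) - g) (K v).
  by rewrite -pDl // addrA subrK.
rewrite eqb.
apply: (le_trans (NcD _ _)).
have := hbn n.
have := CS hp (K (u n) - g) (K v); rewrite -/Q.
simpl in hn1.
have a1 : invn R n * (4%:R * (Q + 1) ^+ 2) <= e.
  rewrite -ler_pdivlMr; last by apply: mulr_gt0; [lra| apply: exprn_gt0; lra].
  by apply: ltW; apply: (le_lt_trans hn2).
have a2 : N (K (u n) - g) * (4%:R * (Q + 1)) <= e.
  by rewrite -ler_pdivlMr //; lra.
have := N_ge0 hp (K (u n) - g); have := invn_gt0 R n.
move=> h1 h2 h3 h4.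
lra.
Qed.
End Gen3.

Lemma ReDc (R : realType) (x y : R[i]) : Re (x + y) = Re x + Re y.
Proof. by case: x => a b; case: y => c d. Qed.

Section Prod.
Variable R : realType.
Variable V : lmodType R[i].
Variable ip : V -> V -> R[i].
Hypothesis hip : inner_product ip.

Lemma hilbert_completeN : hilbert_space ip -> completeN ip.
Proof.
case=> _ hc u hu.
have [|l hl] := hc u.
  move=> e e0.
  have [M hM] := hu (e ^+ 2 / 2) (divr_gt0 (exprn_gt0 _ e0) (ltr0Sn _ 1)).
  exists M => m n hm hn; rewrite /ipnorm.
  rewrite -(gtr0_norm e0) -sqrtr_sqr ltr_sqrt ?exprn_gt0 //.
  apply: (le_lt_trans (hM m n hm hn)).
  have : 0 < e ^+ 2 by apply: exprn_gt0.
  lra.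
exists l => e e0.
have se : 0 < Num.sqrt e by rewrite sqrtr_gt0.
have [M hM] := hl (Num.sqrt e) se.
exists M => n hn; have := hM n hn; rewrite /ipnorm ltr_sqrt //.
by move/ltW.
Qed.

Lemma Nprod (u : V * V) : N (ip_prod ip) u = N ip u.1 + N ip u.2.
Proof. by rewrite /N /ip_prod ReDc. Qed.

Lemma ip_prod_ip : inner_product (ip_prod ip).
Proof.
split.
- move=> a x y z; rewrite /ip_prod /= !(pDl hip) !(pZl hip); ring.
- by move=> x y; rewrite /ip_prod !(pC hip (x.1)) !(pC hip (x.2)) cjD.
- by move=> x; rewrite /ip_prod !(pxx hip) addr_ge0 // ler0c N_ge0.
- case=> x1 x2; rewrite /ip_prod /= !(pxx hip) -rmorphD => /eqP.
  rewrite -(rmorph0 (real_complex R)) => /eqP [] h.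
  have := N_ge0 hip x1; have := N_ge0 hip x2 => h1 h2.
  have e1 : N ip x1 = 0 by lra.
  have e2 : N ip x2 = 0 by lra.
  by rewrite (N_eq0 hip e1) (N_eq0 hip e2).
Qed.

Lemma prod_completeN : completeN ip -> completeN (ip_prod ip).
Proof.
move=> hc u hu.
have [|l1 hl1] := hc (fun n => (u n).1).
  move=> e e0; have [M hM] := hu e e0; exists M => m n hm hn.
  have := hM m n hm hn; rewrite Nprod /=.
  have := N_ge0 hip ((u m).2 - (u n).2); lra.
have [|l2 hl2] := hc (fun n => (u n).2).
  move=> e e0; have [M hM] := hu e e0; exists M => m n hm hn.
  have := hM m n hm hn; rewrite Nprod /=.
  have := N_ge0 hip ((u m).1 - (u n).1); lra.
exists (l1, l2) => e e0.
have e2 : 0 < e / 2 by apply: divr_gt0 => //; lra.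
have [M1 hM1] := hl1 _ e2; have [M2 hM2] := hl2 _ e2.
exists (maxn M1 M2) => n hn; rewrite Nprod /=.
have := hM1 n (leq_trans (leq_maxl _ _) hn); have := hM2 n (leq_trans (leq_maxr _ _) hn).
simpl; lra.
Qed.
End Prod.

Section Tools.
Variable R : realType.
Variable V : lmodType R[i].
Variable ip : V -> V -> R[i].
Hypothesis hip : inner_product ip.
Local Notation N := (N ip).

Lemma ip_ext (X Y : V) : (forall w, ip X w = ip Y w) -> X = Y.
Proof.
move=> h; apply/eqP; rewrite -subr_eq0; apply/eqP; apply: (N_eq0 hip).
by rewrite /N (pBl hip) h subrr.
Qed.

Lemma cvg_add (x y : nat -> V) lx ly : cvgN ip x lx -> cvgN ip y ly ->
  cvgN ip (fun n => x n + y n) (lx + ly).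
Proof.
move=> hx hy e e0.
have e4 : 0 < e / 4%:R by apply: divr_gt0 => //; lra.
have [M1 h1] := hx _ e4; have [M2 h2] := hy _ e4.
exists (maxn M1 M2) => n hn.
have := h1 n (leq_trans (leq_maxl _ _) hn); have := h2 n (leq_trans (leq_maxr _ _) hn).
have -> : x n + y n - (lx + ly) = (x n - lx) + (y n - ly).
  by rewrite opprD addrACA.
have := ND hip (x n - lx) (y n - ly); lra.
Qed.

Lemma cvg_scale (x : nat -> V) lx (c : R[i]) : cvgN ip x lx ->
  cvgN ip (fun n => c *: x n) (c *: lx).
Proof.
move=> hx e e0.
have c0 := Nc_ge0 c.
have e1 : 0 < e / (Nc c + 1) by apply: divr_gt0 => //; lra.
have [M h] := hx _ e1; exists M => n hn.
rewrite -scalerBr (NZ hip).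
have := h n hn; rewrite ler_pdivlMr; last by lra.
have := N_ge0 hip (x n - lx); nra.
Qed.

Lemma cvg_ext (x y : nat -> V) l : (forall n, x n = y n) -> cvgN ip x l -> cvgN ip y l.
Proof. by move=> h hx e e0; have [M hM] := hx e e0; exists M => n hn; rewrite -h; apply: hM. Qed.

Lemma cvg_sub (x y : nat -> V) lx ly : cvgN ip x lx -> cvgN ip y ly ->
  cvgN ip (fun n => x n - y n) (lx - ly).
Proof.
move=> hx hy; have := cvg_add hx (cvg_scale (-1) hy).
rewrite scaleN1r; apply: cvg_ext => n; by rewrite scaleN1r.
Qed.

Lemma cvg_fst (u : nat -> V * V) l : cvgN (ip_prod ip) u l -> cvgN ip (fun n => (u n).1) l.1.
Proof.
move=> h e e0; have [M hM] := h e e0; exists M => n hn.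
have := hM n hn; rewrite (Nprod ip) /=.
have := N_ge0 hip ((u n).2 - l.2); lra.
Qed.
Lemma cvg_snd (u : nat -> V * V) l : cvgN (ip_prod ip) u l -> cvgN ip (fun n => (u n).2) l.2.
Proof.
move=> h e e0; have [M hM] := h e e0; exists M => n hn.
have := hM n hn; rewrite (Nprod ip) /=.
have := N_ge0 hip ((u n).1 - l.1); lra.
Qed.

Variable D : V -> Prop.
Hypothesis hD : subspace D.

Lemma D0 : D 0. Proof. by case: hD. Qed.
Lemma DL a x y : D x -> D y -> D (a *: x + y). Proof. by case: hD => _ h; apply: h. Qed.
Lemma DZ a x : D x -> D (a *: x).
Proof. by move=> h; rewrite -[_ *: _]addr0; apply: DL => //; apply: D0. Qed.
Lemma DD x y : D x -> D y -> D (x + y).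
Proof. by move=> hx hy; rewrite -[x]scale1r; apply: DL. Qed.
Lemma DB x y : D x -> D y -> D (x - y).
Proof. by move=> hx hy; apply: DD => //; rewrite -scaleN1r; apply: DZ. Qed.

Variable A : V -> V.
Hypothesis hA : self_adjoint ip D A.

Lemma AL a x y : D x -> D y -> A (a *: x + y) = a *: A x + A y.
Proof. by case: hA => h _ _; apply: h. Qed.
Lemma A0 : A 0 = 0.
Proof.
have h := AL 1 D0 D0; rewrite scale1r addr0 scale1r in h.
have : A 0 + A 0 = A 0 + 0 by rewrite addr0 -h.
by move/addrI.
Qed.
Lemma AZ a x : D x -> A (a *: x) = a *: A x.
Proof. by move=> h; rewrite -[_ *: x]addr0 AL ?A0 ?addr0 //; apply: D0. Qed.
Lemma AD x y : D x -> D y -> A (x + y) = A x + A y.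
Proof. by move=> hx hy; have := AL 1 hx hy; rewrite !scale1r. Qed.
Lemma AB x y : D x -> D y -> A (x - y) = A x - A y.
Proof.
move=> hx hy; rewrite AD //; last by rewrite -scaleN1r; apply: DZ.
by rewrite -scaleN1r AZ // scaleN1r.
Qed.

Lemma sa_sym x y : D x -> D y -> ip (A x) y = ip x (A y).
Proof.
move=> hx hy; case: hA => _ hd h3.
have [z hz] := (hd y).1 hy.
by rewrite (h3 y z hy hz) hz.
Qed.

Lemma sa_real x : D x -> complex.Im (ip (A x) x) = 0.
Proof.
move=> hx; have := sa_sym hx hx; rewrite (pC hip (A x) x).
case: (ip (A x) x) => a b /= [] h; lra.
Qed.

Lemma sa_closed (x : nat -> V) l y : (forall n, D (x n)) -> cvgN ip x l ->
  cvgN ip (fun n => A (x n)) y -> D l /\ A l = y.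
Proof.
move=> hxD hx hy.
have key z : D z -> ip (A z) l = ip z y.
  move=> hz; apply/eqP; rewrite -subr_eq0; apply/eqP; apply: Nc_eq0.
  apply: le_eps0; first exact: Nc_ge0.
  move=> e e0.
  set a := N (A z); set b := N z.
  have a0 : 0 <= a by apply: N_ge0. have b0 : 0 <= b by apply: N_ge0.
  have e1 : 0 < e / (4%:R * (a + b + 1)) by apply: divr_gt0 => //; lra.
  have [M1 h1] := hx _ e1; have [M2 h2] := hy _ e1.
  set n := maxn M1 M2.
  have k1 := h1 n (leq_maxl _ _); have k2 := h2 n (leq_maxr _ _).
  have eqZ : ip (A z) l - ip z y = ip (A z) (l - x n) - ip z (y - A (x n)).
    rewrite !(pBr hip) (sa_sym hz (hxD n)); ring.
  rewrite eqZ; apply: (le_trans (NcD _ _)); rewrite NcN.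
  have := CS hip (A z) (l - x n); have := CS hip z (y - A (x n)).
  rewrite (NB hip l) (NB hip y) -/a -/b.
  rewrite ler_pdivlMr in k1; last by lra.
  rewrite ler_pdivlMr in k2; last by lra.
  have := N_ge0 hip (x n - l); have := N_ge0 hip (A (x n) - y).
  move=> g1 g2 g3 g4; nra.
case: hA => _ hd h3.
have Dl : D l by apply/hd; exists y.
split => //; apply: h3 => //.
Qed.
End Tools.

Lemma pair_ext (T : Type) (u v : T * T) : u.1 = v.1 -> u.2 = v.2 -> u = v.
Proof. by case: u => ? ?; case: v => ? ? /= -> ->. Qed.
Lemma eq_from_zero (R : realType) (x y z : R[i]) : z = 0 -> x - y = z -> x = y.
Proof. by move=> -> /eqP; rewrite subr_eq0 => /eqP. Qed.
Lemma ImDc (R : realType) (x y : R[i]) : Im (x + y) = Im x + Im y.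
Proof. by case: x => a b; case: y => c d. Qed.

Section Op.
Variable R : realType.
Variable V : lmodType R[i].
Variable ip : V -> V -> R[i].
Hypothesis hip : inner_product ip.
Variable D : V -> Prop.
Hypothesis hD : subspace D.
Variables A B : V -> V.
Hypothesis hA : self_adjoint ip D A.
Hypothesis hB : self_adjoint ip D B.
Variable alpha : R.
Variable lam : R[i].
Hypothesis hlam : Re lam = 0.
Hypothesis hlam0 : lam != 0.

Local Notation a := (alpha%:C).
Definition Kop (u : V * V) := Tblock A B alpha u - lam *: u.

Lemma K1 u : (Kop u).1 = A u.1 + a *: B u.2 - lam *: u.1. Proof. by []. Qed.
Lemma K2 u : (Kop u).2 = - (a *: A u.1) + B u.2 - lam *: u.2. Proof. by []. Qed.

Ltac expand := rewrite ?(pDl hip, pZl hip, pNl hip, pDr hip, pZr hip, pNr hip, p0l hip, p0r hip).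

Lemma Kop_lin : linear_on (dom_prod D) Kop.
Proof.
move=> c x y [hx1 hx2] [hy1 hy2].
apply: pair_ext; rewrite /= ?K1 ?K2 /=.
  rewrite (AL hA) // (AL hB) //.
  by apply: (ip_ext hip) => w; expand; ring.
rewrite (AL hA) // (AL hB) //.
by apply: (ip_ext hip) => w; expand; ring.
Qed.

Lemma lamE : lam = 0 +i* (Im lam).
Proof. by move: hlam; case: lam => r m /= ->. Qed.
Lemma mu_neq0 : Im lam != 0.
Proof. by move: hlam0; rewrite lamE; apply: contra => /eqP ->. Qed.
Lemma conja : conjc a = a. Proof. exact: conjc_real. Qed.

Lemma Kop_bound u : dom_prod D u ->
  N (ip_prod ip) u <= (4%:R * (1 + alpha ^+ 2) / (Im lam) ^+ 2) * N (ip_prod ip) (Kop u).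
Proof.
case: u => u1 u2 [/= hu1 hu2].
set f1 := (Kop (u1, u2)).1; set f2 := (Kop (u1, u2)).2.
set y1 := u1 + a *: u2; set y2 := u2 - a *: u1.
have iden : ip f1 y1 + ip f2 y2 = (1 + a ^+ 2) * (ip (A u1) u1 + ip (B u2) u2)
   - lam * ((N ip u1)%:C + (N ip u2)%:C) - a * lam * (ip u1 u2 - conjc (ip u1 u2)).
  rewrite /f1 /f2 K1 K2 /y1 /y2 /=; expand.
  rewrite conja !(pxx hip) (pC hip u1 u2); ring.
have imI : Im (ip f1 y1) + Im (ip f2 y2) = - (Im lam) * (N ip u1 + N ip u2).
  rewrite -ImDc iden.
  have := sa_real hip hA hu1; have := sa_real hip hB hu2.
  rewrite lamE.
  case: (ip (A u1) u1) => r1 i1; case: (ip (B u2) u2) => r2 i2.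
  case: (ip u1 u2) => r3 i3 /= -> ->; ring.
have c1 := CS hip f1 y1; have c2 := CS hip f2 y2.
have ny1 : N ip y1 <= 2 * N ip u1 + 2 * alpha ^+ 2 * N ip u2.
  by have := ND hip u1 (a *: u2); rewrite (NZ hip) NcRc; lra.
have ny2 : N ip y2 <= 2 * N ip u2 + 2 * alpha ^+ 2 * N ip u1.
  by have := ND hip u2 (- (a *: u1)); rewrite (NN hip) (NZ hip) NcRc; lra.
rewrite !(Nprod ip) /= -/f1 -/f2.
move: c1 c2 imI; rewrite /Nc.
set I1 := Im (ip f1 y1); set I2 := Im (ip f2 y2).
set R1 := Re (ip f1 y1); set R2 := Re (ip f2 y2).
have := N_ge0 hip u1; have := N_ge0 hip u2; have := N_ge0 hip f1; have := N_ge0 hip f2.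
have := N_ge0 hip y1; have := N_ge0 hip y2.
have := mu_neq0; set mu := Im lam.
set U1 := N ip u1; set U2 := N ip u2; set F1 := N ip f1; set F2 := N ip f2.
set Y1 := N ip y1; set Y2 := N ip y2.
move=> hmu gy2 gy1 gf2 gf1 gu2 gu1 c1 c2 imI.
have mu2 : 0 < mu ^+ 2 by rewrite exprn_even_gt0.
have al2 : 0 <= alpha ^+ 2 by apply: sqr_ge0.
have key : mu ^+ 2 * (U1 + U2) ^+ 2 <= 4%:R * (1 + alpha ^+ 2) * (F1 + F2) * (U1 + U2).
  have e1 : mu ^+ 2 * (U1 + U2) ^+ 2 = (I1 + I2) ^+ 2 by rewrite imI; ring.
  rewrite e1.
  have s1 : (I1 + I2) ^+ 2 <= 2 * I1 ^+ 2 + 2 * I2 ^+ 2.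
    by have := sqr_ge0 (I1 - I2); nra.
  have t1 : I1 ^+ 2 <= F1 * Y1 by have := sqr_ge0 R1; lra.
  have t2 : I2 ^+ 2 <= F2 * Y2 by have := sqr_ge0 R2; lra.
  have t3 : F1 * Y1 <= F1 * (2 * U1 + 2 * alpha ^+ 2 * U2) by apply: ler_wpM2l.
  have t4 : F2 * Y2 <= F2 * (2 * U2 + 2 * alpha ^+ 2 * U1) by apply: ler_wpM2l.
  have t5 : 0 <= F1 * U1 * alpha ^+ 2 by apply: mulr_ge0 => //; apply: mulr_ge0.
  have t6 : 0 <= F2 * U2 * alpha ^+ 2 by apply: mulr_ge0 => //; apply: mulr_ge0.
  have t7 : 0 <= F1 * U1 by apply: mulr_ge0 => //; apply: mulr_ge0.
  have t8 : 0 <= F2 * U2 by apply: mulr_ge0 => //; apply: mulr_ge0.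
  have t9 : 0 <= F1 * U2 by apply: mulr_ge0 => //; apply: mulr_ge0.
  have t10 : 0 <= F2 * U1 by apply: mulr_ge0 => //; apply: mulr_ge0.
  have t11 : 0 <= F1 * U2 * alpha ^+ 2 by apply: mulr_ge0 => //; apply: mulr_ge0.
  have t12 : 0 <= F2 * U1 * alpha ^+ 2 by apply: mulr_ge0 => //; apply: mulr_ge0.
  nra.
have [U0|Upos] := eqVneq (U1 + U2) 0.
  rewrite U0; apply: mulr_ge0; last lra.
  by apply: divr_ge0; [apply: mulr_ge0; lra | exact: sqr_ge0].
have Up : 0 < U1 + U2 by rewrite lt0r Upos /=; lra.
rewrite mulrAC ler_pdivlMr //.
have : mu ^+ 2 * (U1 + U2) <= 4%:R * (1 + alpha ^+ 2) * (F1 + F2).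
  rewrite -(ler_pM2r Up); apply: le_trans key; rewrite expr2; lra.
lra.
Qed.

Lemma k_neq0 : (1 + a ^+ 2 : R[i]) != 0.
Proof.
apply/eqP => hk.
have : Re (1 + a ^+ 2 : R[i]) = 1 + alpha ^+ 2 by rewrite /= ; ring.
rewrite hk /= => h; have := sqr_ge0 alpha; lra.
Qed.

Lemma Kop_closed (u : nat -> V * V) l g : (forall n, dom_prod D (u n)) ->
  cvgN (ip_prod ip) u l -> cvgN (ip_prod ip) (fun n => Kop (u n)) g ->
  dom_prod D l /\ Kop l = g.
Proof.
move=> hu hl hg.
have k0 := k_neq0.
set k : R[i] := 1 + a ^+ 2 in k0.
have idA n : k^-1 *: ((Kop (u n)).1 - a *: (Kop (u n)).2 + lam *: ((u n).1 - a *: (u n).2)) = A (u n).1.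
  case: (hu n) => h1 h2; apply: (ip_ext hip) => w; rewrite K1 K2; expand.
  rewrite /k; field; done.
have idB n : k^-1 *: (a *: (Kop (u n)).1 + (Kop (u n)).2 + lam *: (a *: (u n).1 + (u n).2)) = B (u n).2.
  case: (hu n) => h1 h2; apply: (ip_ext hip) => w; rewrite K1 K2; expand.
  rewrite /k; field; done.
have cK1 := cvg_fst hip hg; have cK2 := cvg_snd hip hg.
have cu1 := cvg_fst hip hl; have cu2 := cvg_snd hip hl.
have cA : cvgN ip (fun n => A (u n).1) (k^-1 *: (g.1 - a *: g.2 + lam *: (l.1 - a *: l.2))).
  apply: (cvg_ext idA); apply: (cvg_scale hip).
  apply: (cvg_add hip); last by apply: (cvg_scale hip); apply: (cvg_sub hip) => //; apply: (cvg_scale hip).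
  by apply: (cvg_sub hip) => //; apply: (cvg_scale hip).
have cB : cvgN ip (fun n => B (u n).2) (k^-1 *: (a *: g.1 + g.2 + lam *: (a *: l.1 + l.2))).
  apply: (cvg_ext idB); apply: (cvg_scale hip).
  apply: (cvg_add hip); last by apply: (cvg_scale hip); apply: (cvg_add hip) => //; apply: (cvg_scale hip).
  by apply: (cvg_add hip) => //; apply: (cvg_scale hip).
have [Dl1 Al1] := sa_closed hip hA (fun n => (hu n).1) cu1 cA.
have [Dl2 Bl2] := sa_closed hip hB (fun n => (hu n).2) cu2 cB.
split; first by split.
apply: pair_ext; rewrite ?K1 ?K2 Al1 Bl2; apply: (ip_ext hip) => w; expand;
  rewrite /k; field; done.
Qed.

Lemma Kop_orth g : (forall v, dom_prod D v -> ip_prod ip (Kop v) g = 0) -> g = 0.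
Proof.
case: g => g1 g2 h.
have B0 := A0 hD hB; have A0' := A0 hD hA.
have adj1 : forall x, D x -> ip (A x) (g1 - a *: g2) = ip x (conjc lam *: g1).
  move=> x hx; have := h (x, 0) (conj hx (D0 hD)).
  rewrite /ip_prod K1 K2 /= B0 => e.
  apply: (eq_from_zero e); expand; rewrite conja cjK; ring.
have adj2 : forall y, D y -> ip (B y) (a *: g1 + g2) = ip y (conjc lam *: g2).
  move=> y hy; have := h (0, y) (conj (D0 hD) hy).
  rewrite /ip_prod K1 K2 /= A0' => e.
  apply: (eq_from_zero e); expand; rewrite conja cjK; ring.
case: hA => _ hdA h3A; case: hB => _ hdB h3B.
have Dh1 : D (g1 - a *: g2) by apply/hdA; exists (conjc lam *: g1).
have Dh2 : D (a *: g1 + g2) by apply/hdB; exists (conjc lam *: g2).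
have Ah1 := h3A _ _ Dh1 adj1; have Bh2 := h3B _ _ Dh2 adj2.
have s1 := sa_real hip hA Dh1; have s2 := sa_real hip hB Dh2.
rewrite Ah1 in s1; rewrite Bh2 in s2.
move: s1 s2; expand; rewrite conja (pC hip g2 g1) !(pxx hip) lamE.
have := mu_neq0.
case: (ip g2 g1) => r3 i3 /=.
set mu := Im lam => hmu.
move=> s1 s2.
have hN : mu * (N ip g1 + N ip g2) = 0 by lra.
have : N ip g1 + N ip g2 = 0.
  by move/eqP: hN; rewrite mulf_eq0 (negbTE hmu) /= => /eqP.
have := N_ge0 hip g1; have := N_ge0 hip g2 => n2 n1 hs.
have e1 : N ip g1 = 0 by lra.
have e2 : N ip g2 = 0 by lra.
by rewrite (N_eq0 hip e1) (N_eq0 hip e2).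
Qed.
End Op.

Theorem lemma15 (R : realType) (V : lmodType R[i]) (ip : V -> V -> R[i])
  (D : V -> Prop) (A B : V -> V) (alpha : R) :
  hilbert_space ip -> subspace D -> dense ip D ->
  self_adjoint ip D A -> self_adjoint ip D B ->
  forall lam : R[i],
    spectrum (ip_prod ip) (dom_prod D) (Tblock A B alpha) lam ->
    complex.Re lam = 0 -> lam = 0.
Proof.
move=> hH hD _ hA hB lam hspec hRe.
apply/eqP; apply: contraT => hlam0; exfalso; apply: hspec.
have hip : inner_product ip by case: hH.
have hpi := ip_prod_ip hip.
have hcomp := prod_completeN hip (hilbert_completeN hH).
have hmu := mu_neq0 hRe hlam0.
set c := 4%:R * (1 + alpha ^+ 2) / (complex.Im lam) ^+ 2.
have c0 : 0 <= c.
  apply: divr_ge0; last exact: sqr_ge0.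
  apply: mulr_ge0; first by [].
  by have := sqr_ge0 alpha; lra.
have E0 : dom_prod D 0 by split; apply: D0.
have EL : forall a x y, dom_prod D x -> dom_prod D y -> dom_prod D (a *: x + y).
  by move=> a x y [hx1 hx2] [hy1 hy2]; split; apply: DL.
have KL := Kop_lin hip hA hB alpha lam.
have hb : forall u, dom_prod D u -> N (ip_prod ip) u <= c * N (ip_prod ip) (Kop A B alpha lam u).
  by move=> u hu; apply: (Kop_bound hip hA hB alpha hRe hlam0 hu).
have hcl : forall (u : nat -> V * V) l g, (forall n, dom_prod D (u n)) ->
    cvgN (ip_prod ip) u l -> cvgN (ip_prod ip) (fun n => Kop A B alpha lam (u n)) g ->
    dom_prod D l /\ Kop A B alpha lam l = g.
  by move=> u l g; apply: (Kop_closed hip hA hB).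
have hor : forall g, (forall v, dom_prod D v -> ip_prod ip (Kop A B alpha lam v) g = 0) -> g = 0.
  by move=> g; apply: (Kop_orth hip hD hA hB hRe hlam0).
have surj := surj_gen hpi hcomp E0 EL KL c0 hb hcl hor.
have [Rs hRs] := choice surj.
exists Rs; split.
- by move=> f; have [h1 h2] := hRs f; split.
- move=> u hu.
  have [Dw Kw] := hRs (Kop A B alpha lam u).
  set w := Rs _ in Dw Kw *.
  apply/eqP; rewrite -subr_eq0; apply/eqP; apply: (N_eq0 hpi).
  have Dwu : dom_prod D ((-1) *: u + w) by apply: EL.
  have := hb _ Dwu; rewrite KL // Kw !scaleN1r addNr N0 // mulr0 addrC => h.
  by apply/eqP; rewrite eq_le h N_ge0.
- exists (Num.sqrt c) => f; rewrite /ipnorm.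
  have [Df Kf] := hRs f.
  have := hb _ Df; rewrite Kf => h.
  rewrite -sqrtrM //; apply: ler_wsqrtr; exact: h.
Qed.
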